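(* Let $u$ be a solution of the linear equation $\partial_tu=\Delta u$ on $[0,\infty)\times\mathbb{Z}$ with initial data $u_0\in\ell^\infty_+(\mathbb{Z})$. Then for every $k\in\mathbb{Z}$, $N\in\mathbb{N}$ and $t\ge0$, $$u(t,k)\ge M(u_0,k,N)\,e^{-2t}I_N(2t),\qquad M(u_0,k,N)=\sum_{l=-N}^Nu_0(k-l).$$
   Context: $\Delta v(k)=v(k-1)-2v(k)+v(k+1)$. A solution: $u\in C^0([0,\infty);\ell^\infty_+(\mathbb{Z}))$ with $u(0)=u_0$, each $u(\cdot,k)$ $C^1$ on $(0,\infty)$ satisfying the equation pointwise. $I_N$ is the modified Bessel function of the first kind of order $N$, $I_N(s)=\frac1\pi\int_0^\pi e^{s\cos\theta}\cos(N\theta)\,d\theta$. *)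

(* Defs.v *)
From Stdlib Require Import Reals ZArith Lra.
From Coquelicot Require Import Coquelicot.
Open Scope R_scope.

Definition lap (v : Z -> R) (k : Z) : R :=
  v (k - 1)%Z - 2 * v k + v (k + 1)%Z.

Definition linf_plus (v : Z -> R) : Prop :=
  (exists B : R, forall k, Rabs (v k) <= B) /\ (forall k, 0 <= v k).

Definition C0_linf_plus (u : R -> Z -> R) : Prop :=
  (forall t, 0 <= t -> linf_plus (u t)) /\
  (forall t, 0 <= t -> forall eps, 0 < eps -> exists delta, 0 < delta /\
     forall s, 0 <= s -> Rabs (s - t) < delta -> forall k, Rabs (u s k - u t k) <= eps).

Definition is_solution (u0 : Z -> R) (u : R -> Z -> R) : Prop :=
  C0_linf_plus u /\
  (forall k, u 0 k = u0 k) /\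
  (forall k t, 0 < t ->
     is_derive (fun s => u s k) t (lap (u t) k) /\
     continuous (fun s => Derive (fun s' => u s' k) s) t).

Definition besselI (N : nat) (s : R) : R :=
  / PI * RInt (fun th => exp (s * cos th) * cos (INR N * th)) 0 PI.

(* M(u0,k,N) = sum_{l=-N}^{N} u0(k-l), indexed by j = l + N in 0..2N *)
Definition Mmass (u0 : Z -> R) (k : Z) (N : nat) : R :=
  sum_f_R0 (fun j => u0 (k - (Z.of_nat j - Z.of_nat N))%Z) (2 * N).

(* Main.v *)
Require Import Defs.
From Stdlib Require Import Reals ZArith Lra Lia.
From Coquelicot Require Import Coquelicot.
Open Scope R_scope.

Definition gf (t : R) (l : Z) (th : R) : R := exp (2*t*(cos th - 1)) * cos (IZR l * th).
Definition gk (t : R) (l : Z) : R := / PI * RInt (gf t l) 0 PI.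

Lemma gf_exR t l : ex_RInt (gf t l) 0 PI.
Proof. apply (ex_RInt_continuous (V := R_CompleteNormedModule)); intros; apply (ex_derive_continuous (K := R_AbsRing) (V := R_NormedModule)); unfold gf; auto_derive; auto. Qed.

Definition dgf (t : R) (l : Z) (th : R) : R := 2*(cos th - 1) * gf t l th.

Lemma dgf_exR t l : ex_RInt (dgf t l) 0 PI.
Proof. apply (ex_RInt_continuous (V := R_CompleteNormedModule)); intros; apply (ex_derive_continuous (K := R_AbsRing) (V := R_NormedModule)); unfold dgf, gf; auto_derive; auto. Qed.

Lemma gf_der t l th : is_derive (fun s => gf s l th) t (dgf t l th).
Proof. unfold gf, dgf; auto_derive; auto; unfold gf; ring. Qed.

Lemma RInt_plusR f g a b : ex_RInt f a b -> ex_RInt g a b ->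
  RInt (fun x => f x + g x) a b = RInt f a b + RInt g a b.
Proof. intros; apply (RInt_plus f g); auto. Qed.
Lemma RInt_minusR f g a b : ex_RInt f a b -> ex_RInt g a b ->
  RInt (fun x => f x - g x) a b = RInt f a b - RInt g a b.
Proof. intros; apply (RInt_minus f g); auto. Qed.
Lemma RInt_scalR f a b k : ex_RInt f a b ->
  RInt (fun x => k * f x) a b = k * RInt f a b.
Proof. intros; apply (RInt_scal f); auto. Qed.

Lemma dgf_id t l th : dgf t l th = gf t (l-1) th + gf t (l+1) th - 2 * gf t l th.
Proof.
  unfold dgf, gf. rewrite minus_IZR, plus_IZR.
  replace ((IZR l - 1) * th) with (IZR l * th - th) by ring.
  replace ((IZR l + 1) * th) with (IZR l * th + th) by ring.
  rewrite cos_minus, cos_plus. ring.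
Qed.

Lemma gk_deriv t l : is_derive (fun s => gk s l) t (gk t (l-1) + gk t (l+1) - 2 * gk t l).
Proof.
  unfold gk.
  assert (H : is_derive (fun s => RInt (gf s l) 0 PI) t (RInt (dgf t l) 0 PI)).
  { assert (E : RInt (dgf t l) 0 PI = RInt (fun th => Derive (fun u => gf u l th) t) 0 PI).
    { apply RInt_ext; intros; symmetry; apply is_derive_unique, gf_der. }
    rewrite E. apply (is_derive_RInt_param (fun s th => gf s l th)).
    - apply filter_forall; intros; eexists; apply gf_der.
    - intros th _. apply continuity_2d_pt_ext with (f := fun u v => dgf u l v).
      { intros; symmetry; apply is_derive_unique, gf_der. }
      unfold dgf, gf.
      repeat apply continuity_2d_pt_mult.
      + apply continuity_2d_pt_const.
      + apply continuity_2d_pt_minus. 2: apply continuity_2d_pt_const.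
        apply continuity_1d_2d_pt_comp. apply continuity_cos. apply continuity_2d_pt_id2.
      + apply continuity_1d_2d_pt_comp. apply derivable_continuous_pt, derivable_pt_exp.
        repeat apply continuity_2d_pt_mult.
        apply continuity_2d_pt_const. apply continuity_2d_pt_id1.
        apply continuity_2d_pt_minus. 2: apply continuity_2d_pt_const.
        apply continuity_1d_2d_pt_comp. apply continuity_cos. apply continuity_2d_pt_id2.
      + apply continuity_1d_2d_pt_comp. apply continuity_cos.
        apply continuity_2d_pt_mult. apply continuity_2d_pt_const. apply continuity_2d_pt_id2.
    - apply filter_forall; intros; apply gf_exR. }
  assert (E : gk t (l-1) + gk t (l+1) - 2 * gk t l = / PI * RInt (dgf t l) 0 PI).
  { unfold gk. rewrite (RInt_ext (dgf t l) (fun th => (gf t (l-1) th + gf t (l+1) th) - 2 * gf t l th)).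
    2: intros; apply dgf_id.
    rewrite RInt_minusR, RInt_plusR, RInt_scalR; auto using gf_exR; try ring.
    apply (ex_RInt_plus (V := R_CompleteNormedModule)); apply gf_exR.
    apply (ex_RInt_scal (V := R_CompleteNormedModule)); apply gf_exR. }
  unfold gk in E. rewrite E.
  apply (is_derive_scal (fun s => RInt (gf s l) 0 PI)). exact H.
Qed.



Definition phi (s : R) (j : Z) : R := exp (3*s) * (1 + IZR j ^ 2).

Lemma exp_ge1 s : 0 <= s -> 1 <= exp s.
Proof. intros; pose proof (exp_ineq1_le s); lra. Qed.

Lemma phi_pos s j : 0 < phi s j.
Proof. unfold phi; apply Rmult_lt_0_compat. apply exp_pos. pose proof (pow2_ge_0 (IZR j)); lra. Qed.

Lemma phi_ge s j : 0 <= s -> 1 + IZR j ^ 2 <= phi s j.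
Proof. intros; unfold phi. pose proof (exp_ge1 (3*s)); pose proof (pow2_ge_0 (IZR j)); nra. Qed.

Lemma phi_lap s j : phi s (j-1) + phi s (j+1) - 2 * phi s j = 2 * exp (3*s).
Proof. unfold phi; rewrite minus_IZR, plus_IZR; ring. Qed.

Lemma phi_der s j : is_derive (fun x => phi x j) s (3 * phi s j).
Proof. unfold phi; auto_derive; auto; ring. Qed.

Lemma loc_nonneg f T l : derivable_pt_lim f T l -> 0 <= f T -> (f T = 0 -> 0 < l) ->
  exists d, 0 < d /\ forall s, T <= s <= T + d -> 0 <= f s.
Proof.
  intros H H0 H1.
  destruct (Req_dec (f T) 0) as [E|E].
  - specialize (H1 E). destruct (H (l/2)) as [[dl Hdl] Hd]; [lra|]. simpl in Hd.
    exists (dl/2); split; [lra|]. intros s Hs.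
    destruct (Req_dec s T) as [->|Ns]; [lra|].
    specialize (Hd (s - T)). replace (T + (s - T)) with s in Hd by ring.
    assert (Hq : Rabs ((f s - f T) / (s - T) - l) < l/2) by (apply Hd; [lra| rewrite Rabs_right; lra]).
    apply Rabs_def2 in Hq. rewrite E in Hq.
    assert (0 < f s / (s - T)) by lra.
    assert (f s = f s / (s - T) * (s - T)) by (field; lra).
    assert (0 < s - T) by lra. nra.
  - assert (Hp : 0 < f T) by lra.
    destruct (H 1) as [[dl Hdl] Hd]; [lra|]. simpl in Hd.
    pose proof (Rabs_pos l).
    exists (Rmin (dl/2) (f T / (Rabs l + 1) / 2)); split.
    { apply Rmin_glb_lt; [lra|]. apply Rmult_lt_0_compat; [|lra]. apply Rdiv_lt_0_compat; lra. }
    intros s Hs.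
    destruct (Req_dec s T) as [->|Ns]; [lra|].
    assert (Hm1 := Rmin_l (dl/2) (f T / (Rabs l + 1) / 2)).
    assert (Hm2 := Rmin_r (dl/2) (f T / (Rabs l + 1) / 2)).
    specialize (Hd (s - T)). replace (T + (s - T)) with s in Hd by ring.
    assert (Hq : Rabs ((f s - f T) / (s - T) - l) < 1) by (apply Hd; [lra| rewrite Rabs_right; lra]).
    apply Rabs_def2 in Hq.
    set (q := (f s - f T) / (s - T)) in *.
    assert (f s - f T = q * (s - T)) by (unfold q; field; lra).
    assert (- Rabs l <= l) by (pose proof (Rle_abs (-l)); rewrite Rabs_Ropp in *; lra).
    assert ((Rabs l + 1) * (s - T) <= f T / 2).
    { assert (s - T <= f T / (Rabs l + 1) / 2) by lra.
      apply Rmult_le_compat_l with (r := Rabs l + 1) in H5; [|lra].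
      replace ((Rabs l + 1) * (f T / (Rabs l + 1) / 2)) with (f T / 2) in H5 by (field; lra). lra. }
    nra.
Qed.

Lemma common_delta (P : Z -> R -> Prop) :
  (forall j d d', 0 < d' <= d -> P j d -> P j d') ->
  forall L : nat, (forall j, (Z.abs j <= Z.of_nat L)%Z -> exists d, 0 < d /\ P j d) ->
  exists d, 0 < d /\ forall j, (Z.abs j <= Z.of_nat L)%Z -> P j d.
Proof.
  intros Hm L. induction L as [|L IH]; intros H.
  - destruct (H 0%Z) as [d [Hd Pd]]; [simpl; lia|]. exists d; split; auto.
    intros j Hj. replace j with 0%Z by lia. auto.
  - destruct IH as [d0 [Hd0 P0]]. { intros j Hj; apply H; lia. }
    destruct (H (Z.of_nat (S L))) as [d1 [Hd1 P1]]; [lia|].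
    destruct (H (- Z.of_nat (S L))%Z) as [d2 [Hd2 P2]]; [lia|].
    exists (Rmin d0 (Rmin d1 d2)).
    assert (0 < Rmin d0 (Rmin d1 d2)) by (repeat apply Rmin_glb_lt; auto).
    pose proof (Rmin_l d0 (Rmin d1 d2)). pose proof (Rmin_r d0 (Rmin d1 d2)).
    pose proof (Rmin_l d1 d2). pose proof (Rmin_r d1 d2).
    split; auto. intros j Hj.
    destruct (Z_le_gt_dec (Z.abs j) (Z.of_nat L)) as [Hl|Hl].
    + apply (Hm j d0); [split; lra | apply P0; lia].
    + destruct (Z_le_gt_dec 0 j).
      * replace j with (Z.of_nat (S L)) by lia. apply (Hm _ d1); [split; lra | auto].
      * replace j with (- Z.of_nat (S L))%Z by lia. apply (Hm _ d2); [split; lra | auto].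
Qed.

Lemma MP_eps (z : R -> Z -> R) (a : Z -> R) (B : R)
  (Ha : forall j, 0 <= a j)
  (H0 : forall j, 0 <= z 0 j)
  (Hb : forall t j, 0 <= t -> -B <= z t j)
  (Hc : forall j eps, 0 < eps -> exists d, 0 < d /\ forall s, 0 <= s < d -> Rabs (z s j - z 0 j) <= eps)
  (Hd : forall (t : R) (j : Z), 0 < t -> exists D : R, is_derive (fun s => z s j) t D /\
   z t (j-1)%Z + z t (j+1)%Z - 2 * z t j - a j * z t j <= D) (eps : R) : 0 < eps -> forall t0 j0, 0 <= t0 -> 0 <= z t0 j0 + eps * phi t0 j0.
Proof.
  intros He t0 j0 Ht0.
  set (y := fun s j => z s j + eps * phi s j).
  change (0 <= y t0 j0).
  destruct (Rle_lt_dec 0 (y t0 j0)) as [ok|Hneg]; [exact ok|exfalso].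
  set (L := Z.to_nat (up (B / eps))).
  assert (HL : B / eps < INR L).
  { destruct (archimed (B/eps)) as [A1 _]. unfold L. rewrite INR_IZR_INZ.
    assert (up (B/eps) <= Z.of_nat (Z.to_nat (up (B/eps))))%Z by lia.
    apply IZR_le in H. lra. }
  assert (F1 : forall t j, 0 <= t -> (Z.abs j > Z.of_nat L)%Z -> 0 < y t j).
  { intros t j Ht Hj. unfold y. pose proof (Hb t j Ht). pose proof (phi_ge t j Ht).
    assert (Hj' : INR L + 1 <= Rabs (IZR j)).
    { rewrite <- abs_IZR, INR_IZR_INZ. replace 1 with (IZR 1) by reflexivity.
      rewrite <- plus_IZR. apply IZR_le. lia. }
    assert (HB : B < eps * INR L).
    { apply Rmult_lt_compat_l with (r := eps) in HL; auto.
      replace (eps * (B/eps)) with B in HL by (field; lra). exact HL. }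
    assert (IZR j ^ 2 = Rabs (IZR j) * Rabs (IZR j)) by (rewrite <- Rabs_mult; rewrite Rabs_right; [ring| nra]).
    pose proof (pos_INR L).
    assert (INR L <= IZR j ^ 2) by nra.
    nra. }
  set (E := fun t => 0 <= t <= t0 /\ forall s j, 0 <= s <= t -> 0 <= y s j).
  assert (Ey0 : forall j, 0 < y 0 j).
  { intros j; unfold y. pose proof (H0 j). pose proof (phi_pos 0 j). nra. }
  destruct (completeness E) as [T [HT1 HT2]].
  { exists t0. intros t [Ht _]. lra. }
  { exists 0. split; [lra|]. intros s j Hs. replace s with 0 by lra. left; apply Ey0. }
  assert (E0 : E 0). { split; [lra|]. intros s j Hs. replace s with 0 by lra. left; apply Ey0. }
  assert (P1 : 0 <= T <= t0).
  { split. apply HT1, E0. apply HT2. intros t [Ht _]. lra. }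
  assert (P2 : forall s j, 0 <= s < T -> 0 <= y s j).
  { intros s j Hs. destruct (Rle_lt_dec 0 (y s j)) as [ok|bad]; auto. exfalso.
    assert (T <= s); [|lra]. apply HT2. intros t [Ht Ht'].
    destruct (Rle_lt_dec t s); auto. exfalso. pose proof (Ht' s j). lra. }
  assert (Dy : forall t j, 0 < t -> exists D, derivable_pt_lim (fun s => y s j) t (D + eps * (3 * phi t j)) /\
              z t (j-1)%Z + z t (j+1)%Z - 2 * z t j - a j * z t j <= D).
  { intros t j Ht. destruct (Hd t j Ht) as [D [HD1 HD2]]. exists D; split; auto.
    apply is_derive_Reals. unfold y. apply (is_derive_plus (fun s => z s j)); auto.
    apply (is_derive_scal (fun s => phi s j)). apply phi_der. }
  assert (P3 : forall j, 0 <= y T j).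
  { intros j. destruct (Req_dec T 0) as [T0|Tp].
    { rewrite T0; left; apply Ey0. }
    destruct (Rle_lt_dec 0 (y T j)) as [ok|bad]; auto. exfalso.
    destruct (Dy T j) as [D [HD _]]; [lra|].
    assert (HC := derivable_continuous_pt _ _ (exist _ _ HD)).
    destruct (HC (- y T j / 2)) as [dl [Hdl Hdl2]]; [lra|].
    set (s := T - Rmin dl T / 2).
    assert (Hmin1 := Rmin_l dl T). assert (Hmin2 := Rmin_r dl T).
    assert (0 < Rmin dl T) by (apply Rmin_glb_lt; lra).
    assert (Hs : 0 <= s < T) by (unfold s; lra).
    pose proof (P2 s j Hs).
    assert (Hq : R_dist (y s j) (y T j) < - y T j / 2).
    { apply (Hdl2 s). split. split. exact I. unfold s; lra.
      simpl; unfold R_dist; rewrite Rabs_left; unfold s; lra. }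
    unfold R_dist in Hq; apply Rabs_def2 in Hq; lra. }
  assert (P4 : T < t0).
  { destruct (Req_dec T t0) as [->|]; [|lra]. pose proof (P3 j0). lra. }
  assert (P5 : exists d, 0 < d /\ forall s j, T <= s <= T + d -> 0 <= y s j).
  { destruct (common_delta (fun j d => forall s, T <= s <= T + d -> 0 <= y s j)) with (L := L)
      as [d [Hd0 Hd1]].
    - intros j d d' Hdd' Hp s Hs. apply Hp; lra.
    - intros j Hj. destruct (Req_dec T 0) as [T0|Tp].
      + rewrite T0.
        assert (Hp0 : phi 0 j = 1 + IZR j ^ 2) by (unfold phi; rewrite Rmult_0_r, exp_0; ring).
        assert (Hc0 : 0 < eps * phi 0 j) by (apply Rmult_lt_0_compat; auto; apply phi_pos).
        destruct (Hc j (eps * phi 0 j / 2)) as [d [Hd0 Hd1]]; [lra|].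
        exists (d/2); split; [lra|]. intros s Hs.
        specialize (Hd1 s ltac:(lra)). unfold y.
        pose proof (H0 j). pose proof (phi_ge s j ltac:(lra)).
        pose proof (Rle_abs (z 0 j - z s j)). rewrite Rabs_minus_sym in H2.
        assert (eps * (1 + IZR j ^ 2) <= eps * phi s j) by (apply Rmult_le_compat_l; lra).
        rewrite Hp0 in Hc0, Hd1. lra.
      + destruct (Dy T j) as [D [HD1 HD2]]; [lra|].
        apply (loc_nonneg (fun s => y s j) T _ HD1 (P3 j)).
        intros Hy0. unfold y in Hy0.
        pose proof (P3 (j-1)%Z). pose proof (P3 (j+1)%Z). unfold y in H, H1.
        pose proof (phi_lap T j). pose proof (Ha j). pose proof (phi_pos T j).
        pose proof (phi_ge T j ltac:(lra)). pose proof (pow2_ge_0 (IZR j)).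
        assert (exp (3*T) <= phi T j) by (unfold phi; pose proof (exp_pos (3*T)); nra).
        pose proof (exp_pos (3*T)).
        assert (z T j = - eps * phi T j) by lra.
        rewrite H9 in HD2.
        assert (eps * (phi T (j-1) + phi T (j+1) - 2 * phi T j) = eps * (2 * exp (3*T))) by (rewrite H2; ring).
        assert (0 <= a j * (eps * phi T j)) by (apply Rmult_le_pos; [lra| apply Rmult_le_pos; lra]).
        assert (eps * exp (3*T) <= eps * phi T j) by (apply Rmult_le_compat_l; lra).
        assert (0 < eps * exp (3*T)) by (apply Rmult_lt_0_compat; lra).
        lra.
    - exists d; split; auto. intros s j Hs.
      destruct (Z_le_gt_dec (Z.abs j) (Z.of_nat L)).
      + apply Hd1; auto.
      + left; apply F1; auto; lra. }
  destruct P5 as [d [Hd0 Hd1]].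
  assert (E (Rmin (T + d) t0)).
  { split. split. pose proof (Rmin_glb 0 (T+d) t0). apply Rmin_glb; lra. apply Rmin_r.
    intros s j Hs. destruct (Rle_lt_dec T s).
    - apply Hd1. pose proof (Rmin_l (T+d) t0). lra.
    - apply P2; lra. }
  apply HT1 in H. unfold Rmin in H. destruct (Rle_dec (T+d) t0); lra.
Qed.

Lemma MP (z : R -> Z -> R) (a : Z -> R) (B : R)
  (Ha : forall j, 0 <= a j)
  (H0 : forall j, 0 <= z 0 j)
  (Hb : forall t j, 0 <= t -> -B <= z t j)
  (Hc : forall j eps, 0 < eps -> exists d, 0 < d /\ forall s, 0 <= s < d -> Rabs (z s j - z 0 j) <= eps)
  (Hd : forall (t : R) (j : Z), 0 < t -> exists D : R, is_derive (fun s => z s j) t D /\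
   z t (j-1)%Z + z t (j+1)%Z - 2 * z t j - a j * z t j <= D) : forall t j, 0 <= t -> 0 <= z t j.
Proof.
  intros t j Ht. destruct (Rle_lt_dec 0 (z t j)) as [ok|bad]; auto. exfalso.
  pose proof (phi_pos t j).
  set (eps := - z t j / (2 * phi t j)).
  assert (He : 0 < eps) by (unfold eps; apply Rdiv_lt_0_compat; lra).
  pose proof (MP_eps z a B Ha H0 Hb Hc Hd eps He t j Ht).
  assert (eps * phi t j = - z t j / 2) by (unfold eps; field; lra).
  lra.
Qed.



Lemma gk0 l : gk 0 l = if Z.eq_dec l 0 then 1 else 0.
Proof.
  unfold gk. rewrite (RInt_ext (gf 0 l) (fun th => cos (IZR l * th))).
  2: { intros; unfold gf. replace (2*0*(cos x - 1)) with 0 by ring. rewrite exp_0, Rmult_1_l; reflexivity. }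
  destruct (Z.eq_dec l 0) as [->|Hl].
  - rewrite (RInt_ext _ (fun _ => 1)). 2: { intros; rewrite Rmult_0_l, cos_0; reflexivity. }
    rewrite RInt_const. unfold scal; simpl; unfold mult; simpl. field. apply PI_neq0.
  - assert (Hl' : IZR l <> 0) by (apply not_0_IZR; auto).
    assert (H : is_RInt (fun th => cos (IZR l * th)) 0 PI
                 (minus ((fun th => sin (IZR l * th) / IZR l) PI) ((fun th => sin (IZR l * th) / IZR l) 0))).
    { apply (is_RInt_derive (V := R_CompleteNormedModule) (fun th => sin (IZR l * th) / IZR l) (fun th => cos (IZR l * th))).
      - intros; auto_derive; auto. field; auto.
      - intros; apply (ex_derive_continuous (K := R_AbsRing) (V := R_NormedModule)); auto_derive; auto. }
    rewrite (is_RInt_unique (V := R_CompleteNormedModule) _ _ _ _ H). simpl.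
    rewrite Rmult_0_r, sin_0, sin_eq_0_1 by (exists l; reflexivity).
    unfold minus, plus, opp; simpl. unfold Rdiv; ring.
Qed.

Lemma exp_le1 x : x <= 0 -> exp x <= 1.
Proof. intros H. destruct (Req_dec x 0) as [->|E]. rewrite exp_0; lra.
  rewrite <- exp_0. left; apply exp_increasing; lra. Qed.

Lemma gk_bound t l : 0 <= t -> Rabs (gk t l) <= 1.
Proof.
  intros Ht. unfold gk. rewrite Rabs_mult, Rabs_right.
  2: { left; apply Rinv_0_lt_compat, PI_RGT_0. }
  assert (H : Rabs (RInt (gf t l) 0 PI) <= (PI - 0) * 1).
  { apply abs_RInt_le_const. left; apply PI_RGT_0. apply gf_exR.
    intros th _. unfold gf. rewrite Rabs_mult.
    assert (Rabs (exp (2 * t * (cos th - 1))) <= 1).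
    { rewrite Rabs_right by (left; apply exp_pos).
      pose proof (COS_bound th). apply exp_le1. nra. }
    pose proof (Rabs_pos (exp (2 * t * (cos th - 1)))).
    pose proof (COS_bound (IZR l * th)). assert (Rabs (cos (IZR l * th)) <= 1) by (apply Rabs_le; lra).
    pose proof (Rabs_pos (cos (IZR l * th))). nra. }
  pose proof PI_RGT_0.
  apply Rmult_le_compat_l with (r := / PI) in H. 2: { left; apply Rinv_0_lt_compat; lra. }
  replace (/ PI * ((PI - 0) * 1)) with 1 in H by (field; lra). exact H.
Qed.

Lemma gk_even t l : gk t (- l) = gk t l.
Proof.
  unfold gk; f_equal. apply RInt_ext; intros; unfold gf.
  rewrite opp_IZR. replace (- IZR l * x) with (- (IZR l * x)) by ring. rewrite cos_neg. reflexivity.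
Qed.

Lemma gk_bessel t N : exp (- (2 * t)) * besselI N (2 * t) = gk t (Z.of_nat N).
Proof.
  unfold besselI, gk.
  assert (Hex : ex_RInt (fun th => exp (2 * t * cos th) * cos (INR N * th)) 0 PI).
  { apply (ex_RInt_continuous (V := R_CompleteNormedModule)); intros;
    apply (ex_derive_continuous (K := R_AbsRing) (V := R_NormedModule)); auto_derive; auto. }
  rewrite (RInt_ext (gf t (Z.of_nat N)) (fun th => exp (- (2*t)) * (exp (2 * t * cos th) * cos (INR N * th)))).
  2: { intros; unfold gf. rewrite <- INR_IZR_INZ, <- Rmult_assoc, <- exp_plus. f_equal. f_equal. ring. }
  rewrite RInt_scalR by exact Hex. ring.
Qed.


Definition Dg t m := gk t m - gk t (m+1).



Lemma Dg_deriv t m : is_derive (fun s => Dg s m) t (Dg t (m-1) + Dg t (m+1) - 2 * Dg t m).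
Proof.
  assert (H := is_derive_minus _ _ t _ _ (gk_deriv t m) (gk_deriv t (m+1))).
  replace (Dg t (m-1) + Dg t (m+1) - 2 * Dg t m) with
     (minus (gk t (m - 1) + gk t (m + 1) - 2 * gk t m) (gk t (m + 1 - 1) + gk t (m + 1 + 1) - 2 * gk t (m + 1))).
  exact H. unfold minus, plus, opp, Dg; simpl. replace (m-1+1)%Z with m by ring.
  replace (m+1-1)%Z with m by ring. ring.
Qed.

Lemma Dg_neg t m : Dg t (- m - 1) = - Dg t m.
Proof.
  unfold Dg. replace (- m - 1 + 1)%Z with (- m)%Z by ring.
  replace (- m - 1)%Z with (- (m+1))%Z by ring. rewrite !gk_even. ring.
Qed.

Lemma deriv_cont0 f l : is_derive f 0 l -> forall eps, 0 < eps ->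
  exists d, 0 < d /\ forall s, 0 <= s < d -> Rabs (f s - f 0) <= eps.
Proof.
  intros H eps He. apply is_derive_Reals in H.
  assert (HC := derivable_continuous_pt _ _ (exist _ _ H)).
  destruct (HC eps He) as [dl [Hdl Hdl2]]. exists dl; split; auto.
  intros s Hs. destruct (Req_dec s 0) as [->|Ns].
  - rewrite Rminus_diag, Rabs_R0; lra.
  - left. apply (Hdl2 s). split. split. exact I. auto. simpl; unfold R_dist. rewrite Rminus_0_r, Rabs_right; lra.
Qed.

Definition zm t j := if Z_le_gt_dec 0 j then Dg t j else - Dg t j.
Definition am (j : Z) := if Z.eq_dec j 0 then 2 else if Z.eq_dec j (-1) then 2 else 0.

Lemma zm_deriv t j : exists D, is_derive (fun s => zm s j) t D /\
   zm t (j-1) + zm t (j+1) - 2 * zm t j - am j * zm t j <= D.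
Proof.
  unfold zm, am.
  destruct (Z_le_gt_dec 0 j) as [Hj|Hj].
  - exists (Dg t (j-1) + Dg t (j+1) - 2 * Dg t j). split. apply Dg_deriv.
    destruct (Z.eq_dec j 0) as [->|Hj0].
    + simpl. destruct (Z_le_gt_dec 0 (-1)); [lia|].
      assert (E0 : Dg t (-1) = - Dg t 0) by exact (Dg_neg t 0). lra.
    + destruct (Z.eq_dec j (-1)); [lia|].
      destruct (Z_le_gt_dec 0 (j-1)); [|lia]. destruct (Z_le_gt_dec 0 (j+1)); [|lia]. lra.
  - exists (- (Dg t (j-1) + Dg t (j+1) - 2 * Dg t j)). split.
    apply (is_derive_opp (fun s => Dg s j)). apply Dg_deriv.
    destruct (Z.eq_dec j 0); [lia|].
    destruct (Z.eq_dec j (-1)) as [->|Hj1].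
    + simpl. destruct (Z_le_gt_dec 0 (-2)); [lia|]. destruct (Z_le_gt_dec 0 0); [|lia].
      assert (E1 : Dg t (-2) = - Dg t 1) by exact (Dg_neg t 1).
      assert (E0 : Dg t (-1) = - Dg t 0) by exact (Dg_neg t 0). lra.
    + destruct (Z_le_gt_dec 0 (j-1)); [lia|]. destruct (Z_le_gt_dec 0 (j+1)); [lia|]. lra.
Qed.

Lemma zm_nonneg t j : 0 <= t -> 0 <= zm t j.
Proof.
  intros Ht. apply (MP zm am 2).
  - intros; unfold am; destruct (Z.eq_dec j0 0); [lra|]; destruct (Z.eq_dec j0 (-1)); lra.
  - intros i. unfold zm, Dg. rewrite !gk0.
    destruct (Z_le_gt_dec 0 i); destruct (Z.eq_dec i 0); destruct (Z.eq_dec (i+1) 0); try lia; lra.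
  - intros s i Hs. unfold zm, Dg. pose proof (gk_bound s i Hs). pose proof (gk_bound s (i+1) Hs).
    apply Rabs_le_between in H. apply Rabs_le_between in H0.
    destruct (Z_le_gt_dec 0 i); lra.
  - intros i eps He. destruct (zm_deriv 0 i) as [D [HD _]]. exact (deriv_cont0 _ _ HD eps He).
  - intros s i _. apply zm_deriv.
  - exact Ht.
Qed.

Lemma gk_mono t m : 0 <= t -> (0 <= m)%Z -> gk t (m+1) <= gk t m.
Proof.
  intros Ht Hm. pose proof (zm_nonneg t m Ht). unfold zm, Dg in H.
  destruct (Z_le_gt_dec 0 m); [lra|lia].
Qed.

Lemma gk_mono_N t (N : nat) l : 0 <= t -> (Z.abs l <= Z.of_nat N)%Z -> gk t (Z.of_nat N) <= gk t l.
Proof.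
  intros Ht Hl.
  assert (Hg : forall n : nat, forall m, (0 <= m)%Z -> gk t (m + Z.of_nat n) <= gk t m).
  { induction n as [|n IH]; intros m Hm. simpl. rewrite Z.add_0_r; lra.
    rewrite Nat2Z.inj_succ. replace (m + Z.succ (Z.of_nat n))%Z with (m + Z.of_nat n + 1)%Z by ring.
    pose proof (gk_mono t (m + Z.of_nat n) Ht ltac:(lia)). pose proof (IH m Hm). lra. }
  assert (E : gk t l = gk t (Z.abs l)).
  { destruct (Z_le_gt_dec 0 l). rewrite Z.abs_eq; auto. rewrite Z.abs_neq by lia. rewrite gk_even; auto. }
  rewrite E. specialize (Hg (Z.to_nat (Z.of_nat N - Z.abs l)) (Z.abs l) ltac:(lia)).
  rewrite Z2Nat.id in Hg by lia. replace (Z.abs l + (Z.of_nat N - Z.abs l))%Z with (Z.of_nat N) in Hg by ring.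
  exact Hg.
Qed.


Lemma sum_deriv (F : nat -> R -> R) (F' : nat -> R) n t :
  (forall i, is_derive (F i) t (F' i)) ->
  is_derive (fun s => sum_f_R0 (fun i => F i s) n) t (sum_f_R0 F' n).
Proof.
  intros H. induction n as [|n IH]; simpl. apply H.
  apply (is_derive_plus (fun s => sum_f_R0 (fun i => F i s) n) (F (S n))); auto.
Qed.

Lemma sum_delta (w : Z -> R) (c j : Z) n :
  sum_f_R0 (fun i => w (c - Z.of_nat i)%Z * (if Z.eq_dec (j - (c - Z.of_nat i)) 0 then 1 else 0)) n
  = if Z_le_gt_dec (c - Z.of_nat n) j then (if Z_le_gt_dec j c then w j else 0) else 0.
Proof.
  induction n as [|n IH].
  - simpl. destruct (Z.eq_dec (j - (c - 0)) 0); destruct (Z_le_gt_dec (c - 0) j); destruct (Z_le_gt_dec j c);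
      try lia; try ring. replace j with (c - 0)%Z by lia. ring.
  - rewrite tech5, IH. cbv beta. rewrite Nat2Z.inj_succ.
    destruct (Z.eq_dec (j - (c - Z.succ (Z.of_nat n))) 0);
    destruct (Z_le_gt_dec (c - Z.of_nat n) j); destruct (Z_le_gt_dec j c);
    destruct (Z_le_gt_dec (c - Z.succ (Z.of_nat n)) j); try lia; try ring.
    replace j with (c - Z.succ (Z.of_nat n))%Z by lia. ring.
Qed.

Theorem lemmaA14 (u0 : Z -> R) (u : R -> Z -> R) :
  linf_plus u0 -> is_solution u0 u ->
  forall (k : Z) (N : nat) (t : R), 0 <= t ->
    Mmass u0 k N * exp (- (2 * t)) * besselI N (2 * t) <= u t k.
Proof.
  intros [_ Hu0] [[Hul Huc] [Hu0e Hud]] k N t Ht.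
  rewrite Rmult_assoc, gk_bessel.
  set (c := fun i : nat => (k - (Z.of_nat i - Z.of_nat N))%Z).
  set (v := fun s j => sum_f_R0 (fun i => u0 (c i) * gk s (j - c i)) (2 * N)).
  set (z := fun s j => u s j - v s j).
  assert (Hvd : forall s j, is_derive (fun x => v x j) s
             (sum_f_R0 (fun i => u0 (c i) * (gk s (j - c i - 1) + gk s (j - c i + 1) - 2 * gk s (j - c i))) (2 * N))).
  { intros s j. unfold v. apply (sum_deriv (fun i x => u0 (c i) * gk x (j - c i))).
    intros i. apply (is_derive_scal (fun x => gk x (j - c i))). apply gk_deriv. }
  assert (Hvl : forall s j, v s (j-1)%Z + v s (j+1)%Z - 2 * v s j =
             sum_f_R0 (fun i => u0 (c i) * (gk s (j - c i - 1) + gk s (j - c i + 1) - 2 * gk s (j - c i))) (2 * N)).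
  { intros s j. unfold v. rewrite scal_sum, <- plus_sum, <- minus_sum. apply sum_eq; intros i _.
    replace (j - 1 - c i)%Z with (j - c i - 1)%Z by ring.
    replace (j + 1 - c i)%Z with (j - c i + 1)%Z by ring. ring. }
  assert (Hz : 0 <= z t k).
  { apply (MP z (fun _ => 0) (Mmass u0 k N)).
    - intros; lra.
    - intros j. unfold z, v. rewrite Hu0e.
      rewrite (sum_eq _ (fun i => u0 ((k + Z.of_nat N) - Z.of_nat i)%Z *
           (if Z.eq_dec (j - ((k + Z.of_nat N) - Z.of_nat i)) 0 then 1 else 0))).
      2: { intros i _. rewrite gk0. unfold c. replace (k - (Z.of_nat i - Z.of_nat N))%Z with (k + Z.of_nat N - Z.of_nat i)%Z by ring.
           reflexivity. }
      rewrite sum_delta. pose proof (Hu0 j).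
      destruct (Z_le_gt_dec (k + Z.of_nat N - Z.of_nat (2 * N)) j); destruct (Z_le_gt_dec j (k + Z.of_nat N)); lra.
    - intros s j Hs. unfold z. destruct (Hul s Hs) as [_ Hpos]. pose proof (Hpos j).
      assert (v s j <= Mmass u0 k N).
      { unfold v, Mmass. apply sum_Rle. intros i _. pose proof (Hu0 (c i)).
        pose proof (gk_bound s (j - c i) Hs). apply Rabs_le_between in H1.
        unfold c. fold (c i). nra. }
      lra.
    - intros j eps He.
      destruct (Huc 0 (Rle_refl 0) (eps/2)) as [d1 [Hd1 Hd1']]; [lra|].
      destruct (deriv_cont0 _ _ (Hvd 0 j) (eps/2)) as [d2 [Hd2 Hd2']]; [lra|].
      exists (Rmin d1 d2). split. apply Rmin_glb_lt; auto.
      intros s Hs. pose proof (Rmin_l d1 d2). pose proof (Rmin_r d1 d2).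
      assert (A1 : Rabs (u s j - u 0 j) <= eps/2).
      { apply Hd1'. lra. rewrite Rminus_0_r, Rabs_right; lra. }
      assert (A2 : Rabs (v s j - v 0 j) <= eps/2) by (apply Hd2'; lra).
      unfold z. replace (u s j - v s j - (u 0 j - v 0 j)) with ((u s j - u 0 j) - (v s j - v 0 j)) by ring.
      eapply Rle_trans. apply Rabs_triang. rewrite Rabs_Ropp. lra.
    - intros s j Hs. destruct (Hud j s Hs) as [HD _].
      eexists. split. unfold z.
      apply (is_derive_minus (fun x => u x j) (fun x => v x j)). exact HD. apply Hvd.
      rewrite <- Hvl. unfold lap, minus, plus, opp; simpl. unfold z. lra.
    - exact Ht. }
  unfold z, v in Hz.
  apply Rle_trans with (sum_f_R0 (fun i => u0 (c i) * gk t (k - c i)) (2 * N)); [|lra].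
  unfold Mmass. rewrite Rmult_comm, scal_sum.
  apply sum_Rle. intros i Hi. apply Rmult_le_compat_l. apply Hu0.
  apply gk_mono_N; auto. unfold c. apply Nat2Z.inj_le in Hi. rewrite Nat2Z.inj_mul in Hi. lia.
Qed.
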